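(* Let $C=\{c_1,\dots,c_m\}$ with axis $c_1\lhd\dots\lhd c_m$, and for $1\le i\le j\le m$ let $f(i,j)$ be the probability that, in a vote sampled from the Conitzer distribution for this axis, the candidates $c_i,\dots,c_j$ occupy the top $j-i+1$ positions. Then $f(\ell,\ell)=1/m$ for all $\ell\in[m]$ and $f(1,m)=1$; moreover, for all integers $i,j$ with $1<i\le j<m$: $f(i,j)=1/m$, $f(1,i)=(i+1)/(2m)$, and $f(j,m)=(m-j+2)/(2m)$.
   Context: A vote over $C$ is a total order on $C$ (position 1 is the top). The Conitzer (random peak) distribution for the axis $c_1\lhd\dots\lhd c_m$ generates a vote as follows: pick a candidate uniformly at random and rank it first; then in each of $m-1$ iterations, the already selected candidates form an interval $\{c_a,\dots,c_b\}$ of the axis, and one chooses uniformly at random among the candidates $c_{a-1}$ and $c_{b+1}$ that exist (if only one exists it is chosen with probability 1) and places it in the highest still-available position. *)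

(* Defs.v *)
From mathcomp Require Import all_boot all_order all_algebra.
Set Implicit Arguments. Unset Strict Implicit. Unset Printing Implicit Defensive.
Import Order.TTheory GRing.Theory Num.Theory.
Local Open Scope ring_scope.

(* Candidates c_1,...,c_m are represented by the naturals 1,...,m, the axis
   being the natural order 1 < 2 < ... < m.  A vote is a sequence v of
   candidates that is a permutation of [:: 1; ...; m]; v`_0 is the top
   (position 1), v`_k is at position k+1. *)

Definition votes (m : nat) : seq (seq nat) := permutations (iota 1 m).

(* Given the already placed candidates s (a nonempty prefix of the vote),
   the probability that the next placed candidate is x, following the
   Conitzer process: s must form an interval {lo,...,hi} of the axis and x is
   chosen uniformly among the existing neighbours lo-1 (if lo > 1) and
   hi+1 (if hi < m). *)
Definition conitzer_step (R : fieldType) (m : nat) (s : seq nat) (x : nat) : R :=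
  let lo := foldr minn (head 0%N s) s in
  let hi := foldr maxn (head 0%N s) s in
  let is_int := perm_eq s (iota lo (hi - lo).+1) in
  let left := (1 < lo)%N in
  let right := (hi < m)%N in
  let nb := (left + right)%N in
  if is_int && ((left && (x == lo.-1)) || (right && (x == hi.+1)))
  then (nb%:R)^-1 else 0.

Definition conitzer_prob (R : fieldType) (m : nat) (v : seq nat) : R :=
  (m%:R)^-1 * \prod_(1 <= k < m) conitzer_step R m (take k v) (nth 0%N v k).

Definition f (R : fieldType) (m i j : nat) : R :=
  \sum_(v <- votes m | perm_eq (take (j - i).+1 v) (iota i (j - i).+1))
     conitzer_prob R m v.

(* Main.v *)
Require Import Defs.
From mathcomp Require Import all_boot all_order all_algebra zify ring.
Import Order.TTheory GRing.Theory Num.Theory.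
Local Open Scope ring_scope.

Lemma foldr_min_mem (x0 : nat) s : foldr minn x0 s \in x0 :: s.
Proof.
elim: s => [|y s IH] /=; first by rewrite inE.
rewrite /minn; case: ifP => _; first by rewrite !inE eqxx orbT.
move: IH; rewrite !inE => /orP [->|->] //; by rewrite !orbT.
Qed.

Lemma foldr_min_le (x0 : nat) s z : z \in x0 :: s -> (foldr minn x0 s <= z)%N.
Proof.
elim: s z => [|y s IH] z /=; first by rewrite inE => /eqP ->.
rewrite !inE => /or3P [/eqP ->| /eqP -> | zs].
- by rewrite geq_min IH ?inE ?eqxx ?orbT.
- by rewrite geq_min leqnn.
- by rewrite geq_min IH ?inE ?zs ?orbT.
Qed.

Lemma foldr_max_mem (x0 : nat) s : foldr maxn x0 s \in x0 :: s.
Proof.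
elim: s => [|y s IH] /=; first by rewrite inE.
rewrite /maxn; case: ifP => _; last by rewrite !inE eqxx orbT.
move: IH; rewrite !inE => /orP [->|->] //; by rewrite !orbT.
Qed.

Lemma foldr_max_le (x0 : nat) s z : z \in x0 :: s -> (z <= foldr maxn x0 s)%N.
Proof.
elim: s z => [|y s IH] z /=; first by rewrite inE => /eqP ->.
rewrite !inE => /or3P [/eqP ->| /eqP -> | zs].
- by rewrite leq_max IH ?inE ?eqxx ?orbT.
- by rewrite leq_max leqnn.
- by rewrite leq_max IH ?inE ?zs ?orbT.
Qed.

Lemma lo_eq (s : seq nat) a : a \in s -> (forall z, z \in s -> (a <= z)%N) ->
  foldr minn (head 0%N s) s = a.
Proof.
case: s => // y s' ha hz; set s := y :: s'.
apply/eqP; rewrite eqn_leq; apply/andP; split.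
  by apply: foldr_min_le; rewrite inE ha orbT.
apply: hz; have := foldr_min_mem (head 0%N s) s.
by rewrite inE /= => /orP [/eqP ->|] //; rewrite inE eqxx.
Qed.

Lemma hi_eq (s : seq nat) b : b \in s -> (forall z, z \in s -> (z <= b)%N) ->
  foldr maxn (head 0%N s) s = b.
Proof.
case: s => // y s' ha hz; set s := y :: s'.
apply/eqP; rewrite eqn_leq; apply/andP; split; last first.
  by apply: foldr_max_le; rewrite inE ha orbT.
apply: hz; have := foldr_max_mem (head 0%N s) s.
by rewrite inE /= => /orP [/eqP ->|] //; rewrite inE eqxx.
Qed.

Lemma step_int (R : fieldType) m s a b x : (a <= b)%N ->
  perm_eq s (iota a (b - a).+1) ->
  conitzer_step R m s x =
  if ((1 < a)%N && (x == a.-1)) || ((b < m)%N && (x == b.+1))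
  then ((((1 < a)%N : nat) + ((b < m)%N : nat))%:R)^-1 else 0.
Proof.
move=> ab ps; rewrite /conitzer_step.
have mem z : (z \in s) = (a <= z <= b)%N.
  by rewrite (perm_mem ps) mem_iota; apply/idP/idP; lia.
rewrite (@lo_eq s a); last 2 first.
- by rewrite mem; lia.
- by move=> z; rewrite mem; lia.
rewrite (@hi_eq s b); last 2 first.
- by rewrite mem; lia.
- by move=> z; rewrite mem; lia.
by rewrite ps.
Qed.

Lemma step_mid (R : fieldType) m i j x q y : (i < x < j)%N ->
  perm_eq q (rem x (iota i (j - i).+1)) -> conitzer_step R m q y = 0.
Proof.
move=> hx pq; rewrite /conitzer_step.
have u : uniq (iota i (j - i).+1) by apply: iota_uniq.
have mem z : (z \in q) = (z != x) && (i <= z <= j)%N.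
  rewrite (perm_mem pq) (mem_rem_uniq _ u) inE mem_iota.
  by apply/idP/idP; lia.
rewrite (@lo_eq q i); last 2 first.
- by rewrite mem; lia.
- by move=> z; rewrite mem; lia.
rewrite (@hi_eq q j); last 2 first.
- by rewrite mem; lia.
- by move=> z; rewrite mem; lia.
suff -> : perm_eq q (iota i (j - i).+1) = false by [].
apply/negP => /perm_mem h; have := h x; rewrite mem mem_iota eqxx /=.
by move/esym/idP; lia.
Qed.


Section P.
Variable R : realFieldType.
Implicit Types F : seq nat -> R.

Lemma big_perm_eq F s t : perm_eq s t ->
  \sum_(v <- permutations s) F v = \sum_(v <- permutations t) F v.
Proof. by move=> st; apply: perm_big; apply: perm_permutations. Qed.

Lemma big_perm_cons F s : uniq s -> s != [::] ->
  \sum_(v <- permutations s) F v =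
  \sum_(y <- s) \sum_(q <- permutations (rem y s)) F (y :: q).
Proof.
move=> us ns; rewrite (perm_big _ (permutationsE _)); last by move: ns; case: (s).
by rewrite undup_id // big_allpairs_dep.
Qed.

Lemma rev_inj (T : Type) : injective (@rev T).
Proof. exact: (can_inj (@revK T)). Qed.

Lemma big_perm_rev F s :
  \sum_(v <- permutations s) F v = \sum_(v <- permutations s) F (rev v).
Proof.
rewrite -(big_map rev predT F); apply: perm_big; apply: uniq_perm.
- exact: permutations_uniq.
- rewrite map_inj_uniq ?permutations_uniq //; exact: (@rev_inj nat).
move=> v; rewrite -{2}(revK v) (mem_map (@rev_inj nat)) !mem_permutations.
by rewrite perm_rev.
Qed.

Lemma big_perm_rcons F s : uniq s -> s != [::] ->
  \sum_(v <- permutations s) F v =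
  \sum_(y <- s) \sum_(q <- permutations (rem y s)) F (rcons q y).
Proof.
move=> us ns; rewrite big_perm_rev big_perm_cons //; apply: eq_bigr => y _.
by rewrite [RHS]big_perm_rev; apply: eq_bigr => q _; rewrite rev_cons.
Qed.

Lemma big_perm_split F t u r : uniq (u ++ r) -> perm_eq t (u ++ r) ->
  \sum_(v <- permutations t | perm_eq (take (size u) v) u) F v =
  \sum_(p <- permutations u) \sum_(q <- permutations r) F (p ++ q).
Proof.
move=> uur tur; rewrite -big_filter -big_allpairs_dep.
apply: perm_big; apply: uniq_perm.
- by rewrite filter_uniq // permutations_uniq.
- apply: allpairs_uniq; rewrite ?permutations_uniq //.
  move=> [p1 q1] [p2 q2] /allpairsP [[p1' q1'] /= [h1 _ [-> ->]]].
  move=> /allpairsP [[p2' q2'] /= [h2 _ [-> ->]]] /= /eqP.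
  rewrite eqseq_cat; last first.
    by rewrite (perm_size (etrans (esym (mem_permutations _ _)) h1))
               (perm_size (etrans (esym (mem_permutations _ _)) h2)).
  by case/andP => /eqP -> /eqP ->.
move=> v; rewrite mem_filter mem_permutations; apply/andP/allpairsP.
- case=> hp hv; exists (take (size u) v, drop (size u) v) => /=.
  rewrite cat_take_drop !mem_permutations hp; split => //.
  rewrite -(perm_cat2l (take (size u) v)) cat_take_drop.
  apply: (perm_trans hv); apply: (perm_trans tur).
  by rewrite perm_cat2r perm_sym.
- case=> [[p q] /= [hp hq ->]]; move: hp hq; rewrite !mem_permutations => hp hq.
  rewrite take_size_cat ?(perm_size hp) // hp; split => //.
  apply: (perm_trans _ (perm_trans (perm_refl _) _)); last by rewrite perm_sym; exact: tur.
  by rewrite perm_cat.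
Qed.
End P.


Section S.
Variable R : realFieldType.
Variable m : nat.

Notation step := (conitzer_step R m).

Fixpoint T (p : seq nat) (q : seq nat) : R :=
  match q with
  | [::] => 1
  | x :: q' => step p x * T (rcons p x) q'
  end.

Lemma T_cat p q1 q2 : T p (q1 ++ q2) = T p q1 * T (p ++ q1) q2.
Proof.
elim: q1 p => [|x q1 IH] p /=; first by rewrite mul1r cats0.
by rewrite IH mulrA cat_rcons.
Qed.

Lemma prod_T p q : \prod_(size p <= k < size p + size q)
   step (take k (p ++ q)) (nth 0%N (p ++ q) k) = T p q.
Proof.
elim: q p => [|x q IH] p /=; first by rewrite addn0 big_geq.
rewrite addnS big_ltn ?ltnSn //= ?ltn_addr //.
  rewrite take_size_cat // nth_cat ltnn subnn /=.
  by rewrite -cat_rcons -IH size_rcons addSnnS addnS.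
by rewrite ltnS leq_addr.
Qed.

Definition W (p : seq nat) : R :=
  match p with [::] => 1 | y :: r => T [:: y] r end.

Lemma W_cat p q : p != [::] -> W (p ++ q) = W p * T p q.
Proof. by case: p => // y r _ /=; rewrite T_cat. Qed.

Lemma W_rcons q x : q != [::] -> W (rcons q x) = W q * step q x.
Proof. by move=> nq; rewrite -cats1 W_cat //= mulr1. Qed.

Lemma prob_W v : size v = m -> v != [::] -> conitzer_prob R m v = (m%:R)^-1 * W v.
Proof.
case: v => // y r hs _; rewrite /conitzer_prob; congr (_ * _).
have e : m = (size r).+1 by rewrite -hs.
rewrite [in X in \big[_/_]_(_ <= _ < X) _ ]e. exact: (prod_T [:: y] r).
Qed.

Definition I a b := iota a (b - a).+1.
Definition rest a b := iota 1 a.-1 ++ iota b.+1 (m - b).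

Lemma I_uniq a b : uniq (I a b). Proof. exact: iota_uniq. Qed.

Lemma mem_I a b z : (a <= b)%N -> (z \in I a b) = (a <= z <= b)%N.
Proof. by move=> ?; rewrite mem_iota; apply/idP/idP; lia. Qed.

Lemma mem_rest a b z : (z \in rest a b) = (1 <= z < a)%N || (b < z <= m)%N.
Proof. by rewrite mem_cat !mem_iota; apply/idP/idP; lia. Qed.

Lemma rest_uniq a b : (a <= b.+1)%N -> uniq (rest a b).
Proof.
move=> ab; rewrite cat_uniq !iota_uniq andbT /=.
by apply/hasPn => z; rewrite !mem_iota => h; apply/negP => h'; lia.
Qed.

Lemma size_rest a b : (1 <= a <= b)%N -> (b <= m)%N -> size (rest a b) = (m - (b - a).+1)%N.
Proof. by move=> ab bm; rewrite size_cat !size_iota; lia. Qed.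

Lemma perm_mem_uniq (s t : seq nat) : uniq s -> uniq t -> s =i t -> perm_eq s t.
Proof. exact: uniq_perm. Qed.

Lemma sum_const_cond (r : seq nat) (P : pred nat) (c : R) :
  \sum_(y <- r) (if P y then c else 0) = c *+ count P r.
Proof. by rewrite -big_mkcond big_const_seq iter_addr_0. Qed.

Lemma count_rest a b : (1 <= a <= b)%N -> (b <= m)%N ->
  count (fun y => ((1 < a)%N && (y == a.-1)) || ((b < m)%N && (y == b.+1))) (rest a b)
  = ((1 < a)%N : nat) + ((b < m)%N : nat).
Proof.
move=> ab bm; rewrite count_cat.
rewrite (@eq_in_count _ _ (pred1 a.-1)); last first.
  move=> z; rewrite mem_iota => hz /=.
  by apply/idP/idP; lia.
rewrite (@eq_in_count _ _ (pred1 b.+1) (iota b.+1 (m - b))); last first.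
  move=> z; rewrite mem_iota => hz /=.
  by apply/idP/idP; lia.
rewrite !count_uniq_mem ?iota_uniq // !mem_iota.
congr (nat_of_bool _ + nat_of_bool _); apply/idP/idP; lia.
Qed.

Lemma tail_mass n : forall a b, (1 <= a <= b)%N -> (b <= m)%N ->
  size (rest a b) = n -> forall p, perm_eq p (I a b) ->
  \sum_(q <- permutations (rest a b)) T p q = 1.
Proof.
elim: n => [|n IH] a b ab bm sz p pp.
  move/eqP: sz; rewrite size_eq0 => /eqP ->.
  by rewrite /= big_seq1.
have nr : rest a b != [::] by rewrite -size_eq0 sz.
rewrite big_perm_cons ?rest_uniq //; last by lia.
have -> : \sum_(y <- rest a b) \sum_(q <- permutations (rem y (rest a b))) T p (y :: q)
   = \sum_(y <- rest a b) step p y.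
  apply: eq_bigr => y _ /=; rewrite -mulr_sumr.
  rewrite (@step_int _ _ p a b y) //; last by lia.
  case: ifP => cond; last by rewrite mul0r.
  case/orP: cond => /andP [h /eqP ->].
  - rewrite (@big_perm_eq _ _ _ (rest a.-1 b)); last first.
      apply: perm_mem_uniq; rewrite ?rem_uniq ?rest_uniq //; try lia.
      have ru : uniq (rest a b) by apply: rest_uniq; lia.
      move=> z; rewrite (mem_rem_uniq _ ru) inE !mem_rest.
      by apply/idP/idP; lia.
    rewrite (IH a.-1 b) ?mulr1 //; try lia.
    + by rewrite size_rest; move: sz; rewrite size_rest //; lia.
    + apply: perm_mem_uniq; rewrite ?I_uniq // ?rcons_uniq.
        by rewrite (perm_uniq pp) I_uniq (perm_mem pp) mem_I //; lia.
      by move=> z; rewrite mem_rcons inE (perm_mem pp) !mem_I //; try apply/idP/idP; lia.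
  - rewrite (@big_perm_eq _ _ _ (rest a b.+1)); last first.
      apply: perm_mem_uniq; rewrite ?rem_uniq ?rest_uniq //; try lia.
      have ru : uniq (rest a b) by apply: rest_uniq; lia.
      move=> z; rewrite (mem_rem_uniq _ ru) inE !mem_rest.
      by apply/idP/idP; lia.
    rewrite (IH a b.+1) ?mulr1 //; try lia.
    + by rewrite size_rest; move: sz; rewrite size_rest //; lia.
    + apply: perm_mem_uniq; rewrite ?I_uniq // ?rcons_uniq.
        by rewrite (perm_uniq pp) I_uniq (perm_mem pp) mem_I //; lia.
      by move=> z; rewrite mem_rcons inE (perm_mem pp) !mem_I //; try apply/idP/idP; lia.
have hab : (a <= b)%N by lia.
under eq_bigr => y _ do rewrite (@step_int _ _ p a b y hab pp).
rewrite sum_const_cond count_rest //; set k := (_ + _)%N.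
rewrite -(mulr_natr (k%:R)^-1 k) mulVf //.
rewrite pnatr_eq0; move: sz; rewrite size_rest //. 
case: (1 < a)%N; case: (b < m)%N => //=; lia.
Qed.

Definition Hs s := \sum_(p <- permutations s) W p.
Definition H i j := Hs (I i j).

Lemma H_single l : H l l = 1.
Proof. by rewrite /H /I subnn /Hs /= big_seq1. Qed.

Lemma Ieq i j : (i < j)%N -> I i j = i :: rcons (iota i.+1 (j - i.+1)) j.
Proof.
move=> ij; rewrite /I (_ : (j - i).+1 = 1 + ((j - i.+1) + 1))%N; last by lia.
rewrite iotaD /= iotaD /= cats1 addn1; congr (_ :: rcons _ _); lia.
Qed.

Lemma sum_I (G : nat -> R) i j : (i < j)%N ->
  \sum_(y <- I i j) G y = G i + \sum_(y <- iota i.+1 (j - i.+1)) G y + G j.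
Proof. by move=> ij; rewrite Ieq // big_cons big_rcons /= addrA. Qed.

Lemma perm_nil {q s : seq nat} : q \in permutations s -> s != [::] -> q != [::].
Proof.
rewrite mem_permutations => /perm_size; case: q; case: s => //.
Qed.

Lemma H_rec i j : (1 <= i < j)%N -> (j <= m)%N ->
  H i j = H i.+1 j * ((((1 < i.+1)%N : nat) + ((j < m)%N : nat))%:R)^-1
        + H i j.-1 * ((((1 < i)%N : nat) + ((j.-1 < m)%N : nat))%:R)^-1.
Proof.
move=> ij jm; rewrite {1}/H /Hs big_perm_rcons ?I_uniq //.
rewrite sum_I; last by lia.
rewrite [X in _ + X + _]big1_seq ?addr0; last first.
  move=> y /andP [_]; rewrite mem_iota => hy.
  apply: big1_seq => q /andP [_ hq].
  rewrite W_rcons; last first.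
    apply: (perm_nil hq); rewrite -size_eq0 size_rem ?mem_I /I ?size_iota; lia.
  rewrite (@step_mid R m i j y q y) ?mulr0 //; first by lia.
  by rewrite -mem_permutations.
congr (_ + _).
- rewrite /H /Hs mulr_suml.
  have -> : rem i (I i j) = I i.+1 j.
    rewrite /I (_ : (j - i).+1 = (j - i.+1).+2)%N; last by lia.
    by rewrite /= eqxx.
  apply: eq_big_seq => q hq.
  rewrite W_rcons; last by apply: (perm_nil hq); rewrite /I.
  congr (_ * _); move: hq; rewrite mem_permutations => hq.
  rewrite (@step_int _ _ q i.+1 j i) //; last by lia.
  by rewrite ifT //; lia.
- rewrite /H /Hs mulr_suml.
  rewrite (@big_perm_eq _ _ _ (I i j.-1)); last first.
    apply: perm_mem_uniq; rewrite ?rem_uniq ?I_uniq //.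
    move=> z; rewrite (mem_rem_uniq _ (I_uniq _ _)) inE !mem_I; lia.
  apply: eq_big_seq => q hq.
  rewrite W_rcons; last by apply: (perm_nil hq); rewrite /I.
  congr (_ * _); move: hq; rewrite mem_permutations => hq.
  rewrite (@step_int _ _ q i j.-1 j) //; last by lia.
  by rewrite ifT //; lia.
Qed.

Lemma natb_t (b : bool) : b -> (b : nat) = 1%N. Proof. by case: b. Qed.
Lemma natb_f (b : bool) : ~~ b -> (b : nat) = 0%N. Proof. by case: b. Qed.

Lemma two_ne0 : (2%:R : R) != 0. Proof. by rewrite pnatr_eq0. Qed.

Lemma half_half : (1 + 1)%:R^-1 + (1 + 1)%:R^-1 = 1 :> R.
Proof. by rewrite addn1; field. Qed.

Lemma H_int n : forall i j, (j - i)%N = n -> (1 < i)%N -> (i <= j)%N -> (j < m)%N ->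
  H i j = 1.
Proof.
elim: n => [|n IH] i j e hi ij jm.
  have -> : j = i by lia.
  exact: H_single.
rewrite H_rec; try lia.
rewrite (IH i.+1 j) ?(IH i j.-1); try lia.
rewrite !natb_t; try lia.
by rewrite !mul1r half_half.
Qed.

Lemma H_left i : (1 <= i < m)%N -> H 1 i = i.+1%:R / 2%:R.
Proof.
elim: i => [|i IH] hi; first by lia.
case: (posnP i) => [->|ip].
  by rewrite H_single mulfV // two_ne0.
rewrite H_rec; try lia.
rewrite /= IH; try lia.
rewrite (@H_int (i - 1) 2 i.+1); try lia.
rewrite (@natb_t (i.+1 < m)%N); last by lia.
rewrite (@natb_t (i < m)%N); last by lia.
rewrite add0n invr1 mulr1 mul1r.
rewrite -[i.+2]addn1 -[i.+1]addn1 !natrD.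
by field.
Qed.

Lemma H_right k : forall j, (m - j)%N = k -> (1 < j <= m)%N ->
  H j m = (m - j + 2)%:R / 2%:R.
Proof.
elim: k => [|k IH] j e hj.
  have -> : j = m by lia.
  by rewrite H_single subnn add0n mulfV // two_ne0.
rewrite H_rec; try lia.
rewrite (IH j.+1); try lia.
rewrite (@H_int (m.-1 - j) j m.-1); try lia.
rewrite (@natb_t (1 < j.+1)%N); last by lia.
rewrite (@natb_f (m < m)%N); last by lia.
rewrite (@natb_t (1 < j)%N); last by lia.
rewrite (@natb_t (m.-1 < m)%N); last by lia.
rewrite addn0 invr1 mulr1 mul1r.
have -> : (m - j + 2 = (m - j.+1 + 2) + 1)%N by lia.
rewrite (natrD _ (m - j.+1 + 2) 1) addn1.
by field.
Qed.

Lemma H_full : (0 < m)%N -> H 1 m = m%:R.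
Proof.
move=> hm; case: (ltngtP m 1) => [h|hm1|e]; [by lia | | by rewrite e H_single].
rewrite H_rec; try lia.
rewrite (@H_right (m - 2) 2); try lia.
rewrite (@H_left m.-1); try lia.
rewrite (@natb_t (1 < 2)%N) //.
rewrite (@natb_f (m < m)%N); last by lia.
rewrite (@natb_f (1 < 1)%N) //.
rewrite (@natb_t (m.-1 < m)%N); last by lia.
rewrite addn0 add0n invr1 !mulr1 prednK; last by lia.
have -> : (m - 2 + 2 = m)%N by lia.
by field.
Qed.

Lemma big_perm_split' (F : seq nat -> R) (t u r : seq nat) (L : nat) : size u = L -> uniq (u ++ r) -> perm_eq t (u ++ r) ->
  \sum_(v <- permutations t | perm_eq (take L v) u) F v =
  \sum_(p <- permutations u) \sum_(q <- permutations r) F (p ++ q).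
Proof. by move=> <-; apply: big_perm_split. Qed.

Lemma f_eq i j : (1 <= i <= j)%N -> (j <= m)%N -> f R m i j = (m%:R)^-1 * H i j.
Proof.
move=> ij jm; rewrite /f /votes.
rewrite (@big_perm_split' _ _ (I i j) (rest i j)); first last.
- apply: perm_mem_uniq; rewrite ?iota_uniq //.
    rewrite cat_uniq I_uniq rest_uniq ?andbT /=; last by lia.
    by apply/hasPn => z; rewrite mem_rest => h; apply/negP; rewrite mem_I; lia.
  by move=> z; rewrite mem_cat mem_I ?mem_rest ?mem_iota; lia.
- rewrite cat_uniq I_uniq rest_uniq ?andbT /=; last by lia.
  by apply/hasPn => z; rewrite mem_rest => h; apply/negP; rewrite mem_I; lia.
- by rewrite size_iota.
rewrite /H /Hs mulr_sumr; apply: eq_big_seq => p hp.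
have pn : p != [::] by apply: (perm_nil hp); rewrite /I.
have pI : perm_eq p (I i j) by rewrite -mem_permutations.
rewrite (@eq_big_seq _ _ _ _ _ _ (fun q => (m%:R)^-1 * W p * T p q)); last first.
  move=> q hq; rewrite prob_W; last by case: (p) pn.
    by rewrite W_cat // mulrA.
  rewrite size_cat (perm_size pI) (perm_size (etrans (esym (mem_permutations _ _)) hq)).
  rewrite size_rest ?size_iota; lia.
rewrite -mulr_sumr (@tail_mass (size (rest i j)) i j) ?mulr1 //; lia.
Qed.
End S.

Theorem proposition1 (R : realFieldType) (m : nat) (hm : (0 < m)%N) :
  (forall l : nat, (1 <= l <= m)%N -> f R m l l = (m%:R)^-1) /\
  f R m 1 m = 1 /\
  (forall i j : nat, (1 < i)%N -> (i <= j)%N -> (j < m)%N ->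
     [/\ f R m i j = (m%:R)^-1,
         f R m 1 i = (i.+1)%:R / (2 * m)%:R &
         f R m j m = (m - j + 2)%:R / (2 * m)%:R]).
Proof.
have m0 : (m%:R : R) != 0 by rewrite pnatr_eq0 -lt0n.
split.
  move=> l hl; rewrite f_eq; try lia.
  by rewrite H_single mulr1.
split.
  rewrite f_eq; try lia.
  by rewrite H_full // mulVf.
move=> i j hi ij jm; split.
- rewrite f_eq; try lia.
  by rewrite (@H_int R m (j - i) i j) ?mulr1 //; lia.
- rewrite f_eq; try lia.
  rewrite H_left; last by lia.
  by rewrite natrM; field.
- rewrite f_eq; try lia.
  rewrite (@H_right R m (m - j) j); try lia.
  by rewrite natrM; field.
Qed.
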